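(* A lattice $L$ is isomorphic to a lattice of subclones (i.e., to the lattice $\mathrm{Sb}(F)$ of all subclones of some clone $F$ on some set $A$) if and only if $L$ is isomorphic to the lattice of subalgebras of a block algebra.
   Context: Finitary operations on $A$ include nullary ones. A clone on $A$ is a set of finitary operations on $A$ containing all projections $p^{(n)}_i(a_1,\dots,a_n)=a_i$, closed under composition ($f$ $n$-ary, $g_1,\dots,g_n$ $k$-ary, $k\ge0$, gives $\mathbf a\mapsto f(g_1(\mathbf a),\dots,g_n(\mathbf a))$) and under restriction (if an $n$-ary $f$, $n\ge1$, does not depend on its last argument, the $(n-1)$-ary $g(a_1,\dots,a_{n-1})=f(a_1,\dots,a_{n-1},b)$ belongs to it). A subclone of a clone $F$ on $A$ is a subset of $F$ that is itself a clone on $A$; $\mathrm{Sb}(F)$ is ordered by inclusion. Let $\omega=\{1,2,\dots\}$. The top extension of $f:A^n\to A$ is $f^\top:A^\omega\to A$, $f^\top(s)=f(s_1,\dots,s_n)$. The full block algebra on $A$ has universe $\{f^\top: f\text{ finitary on }A\}$, nullary operations $\mathsf e_i(s)=s_i$ ($i\ge1$) and $(n+1)$-ary operations $q_n(\varphi,\psi_1,\dots,\psi_n)(s)=\varphi(s[\psi_1(s),\dots,\psi_n(s)])$ ($n\ge0$), where $s[b_1,\dots,b_n]$ replaces the first $n$ entries of $s$ by $b_1,\dots,b_n$. A block algebra (on $A$) is a subalgebra of the full block algebra on $A$. *)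

(* Defs.v *)
From mathcomp Require Import all_boot all_order.
Set Implicit Arguments. Unset Strict Implicit. Unset Printing Implicit Defensive.

Definition operation (A : Type) : Type := {n : nat & ('I_n -> A) -> A}.

Definition mk_op (A : Type) (n : nat) (f : ('I_n -> A) -> A) : operation A :=
  existT (fun n => ('I_n -> A) -> A) n f.

Definition snoc (A : Type) (n : nat) (a : 'I_n -> A) (b : A) : 'I_n.+1 -> A :=
  fun i => if unlift ord_max i is Some j then a j else b.

Definition is_clone (A : Type) (F : operation A -> Prop) : Prop :=
  (forall (n : nat) (i : 'I_n), F (mk_op (fun a : 'I_n -> A => a i))) /\
  (forall (n k : nat) (f : ('I_n -> A) -> A) (g : 'I_n -> ('I_k -> A) -> A),
      F (mk_op f) -> (forall i, F (mk_op (g i))) ->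
      F (mk_op (fun a : 'I_k -> A => f (fun i => g i a)))) /\
  (forall (n : nat) (f : ('I_n.+1 -> A) -> A) (g : ('I_n -> A) -> A),
      F (mk_op f) ->
      (forall a b b', f (snoc a b) = f (snoc a b')) ->
      (forall a b, g a = f (snoc a b)) ->
      F (mk_op g)).

Definition subclone_of (A : Type) (F : operation A -> Prop)
    (G : operation A -> Prop) : Prop :=
  (forall o, G o -> F o) /\ is_clone G.

(* Sequences s in A^omega, omega = {1,2,...}, are represented as s : nat -> A,
   with s_(i+1) represented by s i (0-based indexing). *)

Definition blockfun (A : Type) : Type := (nat -> A) -> A.

Definition top_ext (A : Type) (n : nat) (f : ('I_n -> A) -> A) : blockfun A :=
  fun s => f (fun i : 'I_n => s (nat_of_ord i)).

Definition in_full_block (A : Type) (phi : blockfun A) : Prop :=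
  exists (n : nat) (f : ('I_n -> A) -> A), phi = top_ext f.

(* nullary operation e_(i+1) *)
Definition block_e (A : Type) (i : nat) : blockfun A := fun s => s i.

Definition replace_first (A : Type) (n : nat) (s : nat -> A) (b : 'I_n -> A)
  : nat -> A :=
  fun j => match ltnP j n with
           | LtnNotGeq h => b (Ordinal h)
           | _ => s j
           end.

Definition block_q (A : Type) (n : nat) (phi : blockfun A)
    (psi : 'I_n -> blockfun A) : blockfun A :=
  fun s => phi (replace_first s (fun i => psi i s)).

Definition closed_block_ops (A : Type) (S : blockfun A -> Prop) : Prop :=
  (forall i : nat, S (block_e i)) /\
  (forall (n : nat) (phi : blockfun A) (psi : 'I_n -> blockfun A),
      S phi -> (forall i, S (psi i)) -> S (block_q phi psi)).

Definition is_block_algebra (A : Type) (B : blockfun A -> Prop) : Prop :=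
  (forall phi, B phi -> in_full_block phi) /\ closed_block_ops B.

Definition subalgebra_of (A : Type) (B : blockfun A -> Prop)
    (S : blockfun A -> Prop) : Prop :=
  (forall phi, S phi -> B phi) /\ closed_block_ops S.

(* L is isomorphic to the lattice of all sets X (of elements of T) with
   P X, ordered by inclusion: a bijection onto {X | P X} which preserves
   and reflects the order (for lattices this is a lattice isomorphism). *)
Definition iso_to_inclusion_lattice (d : Order.disp_t) (L : latticeType d)
    (T : Type) (P : (T -> Prop) -> Prop) : Prop :=
  exists phi : L -> (T -> Prop),
    (forall x, P (phi x)) /\
    (forall X, P X -> exists x, phi x = X) /\
    (forall x y, (x <= y)%O <-> (forall t, phi x t -> phi y t)).

(* Main.v *)
Require Import Defs.
From mathcomp Require Import all_boot all_order.
From Stdlib Require Import FunctionalExtensionality PropExtensionality IndefiniteDescription.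
Set Implicit Arguments. Unset Strict Implicit. Unset Printing Implicit Defensive.

Section Aux.
Variable A : Type.

Definition ext n (a : 'I_n -> A) (x : A) : nat -> A :=
  fun j => match (insub j : option 'I_n) with Some i => a i | None => x end.

Lemma ext_val n (a : 'I_n -> A) x j (h : j < n) : ext a x j = a (Ordinal h).
Proof. by rewrite /ext (insubT (fun j => j < n) h). Qed.

Lemma top_ext_ext n (f : ('I_n -> A) -> A) a x : top_ext f (ext a x) = f a.
Proof.
rewrite /top_ext; congr f; apply: functional_extensionality => i.
by rewrite (ext_val _ _ (ltn_ord i)); congr a; apply: val_inj.
Qed.

Lemma snoc_lt N (a : 'I_N -> A) b (i : 'I_N.+1) (h : i < N) : snoc a b i = a (Ordinal h).
Proof.
rewrite /snoc; case: unliftP => [j Ej | Ej].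
  congr a; apply: val_inj => /=; rewrite Ej /= /bump; have := ltn_ord j => /= Hj.
  by rewrite leqNgt Hj.
by exfalso; move: (h); rewrite Ej /= ltnn.
Qed.

Lemma snoc_max N (a : 'I_N -> A) b : snoc a b ord_max = b.
Proof. by rewrite /snoc unlift_none. Qed.

Definition Fb (S : blockfun A -> Prop) : operation A -> Prop :=
  fun o => S (top_ext (projT2 o)).
Definition Bf (G : operation A -> Prop) : blockfun A -> Prop :=
  fun phi => exists o : operation A, G o /\ phi = top_ext (projT2 o).

Lemma KL_le G m n (g : ('I_m -> A) -> A) (f : ('I_n -> A) -> A) :
  is_clone G -> G (mk_op g) -> top_ext g = top_ext f -> m <= n -> G (mk_op f).
Proof.
move=> [pr [co _]] Gg e H.
have : G (mk_op (fun a : 'I_n -> A => g (fun i => (fun a => a (widen_ord H i)) a))).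
  by apply: co => // i; apply: pr.
congr (G (mk_op _)); apply: functional_extensionality => a.
rewrite -(top_ext_ext f a (f a)) -e /top_ext; congr g.
apply: functional_extensionality => i.
by rewrite (ext_val _ _ (leq_trans (ltn_ord i) H)); congr a; apply: val_inj.
Qed.

Lemma KL_ind G n (f : ('I_n -> A) -> A) d : forall m (g : ('I_m -> A) -> A),
  m = d + n -> is_clone G -> G (mk_op g) -> top_ext g = top_ext f -> G (mk_op f).
Proof.
elim: d => [|d IH] m g em cl Gg e.
  by subst m; apply: (KL_le cl Gg e).
subst m.
pose g' := fun a : 'I_(d + n) -> A => f (fun i : 'I_n => a (widen_ord (leq_addl d n) i)).
have E : forall a b, g (snoc a b) = g' a.
  move=> a b; rewrite -(top_ext_ext g (snoc a b) (g (snoc a b))) e /top_ext /g'.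
  congr f; apply: functional_extensionality => i.
  have h1 : i < d + n := leq_trans (ltn_ord i) (leq_addl d n).
  rewrite (ext_val _ _ (ltnW h1 : i < (d + n).+1)) snoc_lt.
  by congr a; apply: val_inj.
apply: (IH (d + n) g' erefl cl) => //.
case: cl => [pr [co re]]; apply: (re (d + n) g g') => //.
  by move=> a b b'; rewrite !E.
Qed.

Lemma KL G m n (g : ('I_m -> A) -> A) (f : ('I_n -> A) -> A) :
  is_clone G -> G (mk_op g) -> top_ext g = top_ext f -> G (mk_op f).
Proof.
move=> cl Gg e; case: (leqP m n) => H; first exact: (KL_le cl Gg e).
exact: (@KL_ind G n f (m - n) m g (esym (subnK (ltnW H))) cl Gg e).
Qed.


Lemma Fb_clone S : closed_block_ops S -> is_clone (Fb S).
Proof.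
move=> [He Hq]; split; [|split].
- by move=> n i; apply: (He i).
- move=> n k f g Sf Sg; rewrite /Fb /=.
  have -> : top_ext (fun a : 'I_k -> A => f (fun i => g i a))
          = block_q (top_ext f) (fun i => top_ext (g i)).
    apply: functional_extensionality => s; rewrite /block_q /top_ext.
    congr f; apply: functional_extensionality => j; rewrite /replace_first.
    case: ltnP => h; first by congr (g _ _); apply: val_inj.
    by move: (ltn_ord j); rewrite ltnNge h.
  by apply: Hq.
- move=> n f g Sf _ Eg; rewrite /Fb /=.
  have -> : top_ext g = top_ext f; last exact: Sf.
  apply: functional_extensionality => s; rewrite /top_ext (Eg _ (s n)).
  congr f; apply: functional_extensionality => i.
  case: (ltnP i n) => h; first by rewrite (snoc_lt _ _ h).
  have -> : i = ord_max by apply: val_inj; apply/eqP; rewrite eqn_leq h -ltnS ltn_ord.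
  by rewrite snoc_max.
Qed.


Lemma Bf_closed G : is_clone G -> closed_block_ops (Bf G).
Proof.
move=> cl; have [pr [co _]] := cl; split.
  move=> i; exists (mk_op (fun a : 'I_i.+1 -> A => a ord_max)); split => //.
move=> n phi psi [[m f0] [Gf0 ->]] Hpsi.
have [o Ho] : exists o : 'I_n -> operation A, forall i, G (o i) /\ psi i = top_ext (projT2 (o i)).
  exists (fun i => proj1_sig (constructive_indefinite_description _ (Hpsi i))).
  by move=> i; case: (constructive_indefinite_description _ _).
pose K := maxn m (\max_(i < n) projT1 (o i)).
have Hk : forall i, projT1 (o i) <= K.
  by move=> i; apply: leq_trans (leq_bigmax i) (leq_maxr _ _).
have Hm : m <= K by apply: leq_maxl.
pose g' := fun (j : 'I_m) (a : 'I_K -> A) =>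
  match (insub (val j) : option 'I_n) with
  | Some i => projT2 (o i) (fun l => a (widen_ord (Hk i) l))
  | None => a (widen_ord Hm j) end.
exists (mk_op (fun a : 'I_K -> A => f0 (fun j => g' j a))); split.
  apply: co => // j; rewrite /g'; case: (insub _) => [i|]; last exact: pr.
  case: (Ho i) => Goi _; move: Goi; case: (o i) (Hk i) => k g Hki /= Gg.
  apply: (KL cl Gg); apply: functional_extensionality => s; rewrite /top_ext //.
apply: functional_extensionality => s; rewrite /block_q /top_ext /=.
congr f0; apply: functional_extensionality => j; rewrite /replace_first /g'.
case: insubP => [i Hj Hv|Hj].
  case: ltnP => h; last by move: h; rewrite leqNgt Hj.
  have -> : Ordinal h = i by apply: val_inj; rewrite /= Hv.
  by case: (Ho i) => _ ->.
by case: ltnP => h //; move: Hj; rewrite h.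
Qed.

End Aux.

Lemma transfer d (L : latticeType d) T T' (P : (T -> Prop) -> Prop)
  (P' : (T' -> Prop) -> Prop) (Phi : (T -> Prop) -> (T' -> Prop))
  (Psi : (T' -> Prop) -> (T -> Prop)) :
  (forall X, P X -> P' (Phi X)) -> (forall Y, P' Y -> P (Psi Y)) ->
  (forall X, P X -> forall t, Psi (Phi X) t <-> X t) ->
  (forall Y, P' Y -> forall t, Phi (Psi Y) t <-> Y t) ->
  (forall X X', (forall t, X t -> X' t) -> forall t, Phi X t -> Phi X' t) ->
  (forall Y Y', (forall t, Y t -> Y' t) -> forall t, Psi Y t -> Psi Y' t) ->
  iso_to_inclusion_lattice L P -> iso_to_inclusion_lattice L P'.
Proof.
move=> HP HP' PsiPhi PhiPsi mPhi mPsi [phi [Pphi [surj ord]]].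
exists (fun x => Phi (phi x)); split; first by move=> x; apply: HP.
split.
  move=> Y PY; case: (surj _ (HP' _ PY)) => x ex; exists x; rewrite ex.
  apply: functional_extensionality => t; apply: propositional_extensionality.
  exact: PhiPsi.
move=> x y; split.
  by move/ord => H; apply: mPhi.
move=> H; apply/ord => t /(PsiPhi _ (Pphi x)) h; apply/(PsiPhi _ (Pphi y)).
exact: mPsi H t h.
Qed.

Theorem proposition10p8 (d : Order.disp_t) (L : latticeType d) :
  (exists (A : Type) (F : operation A -> Prop),
      is_clone F /\ iso_to_inclusion_lattice L (subclone_of F)) <->
  (exists (A : Type) (B : blockfun A -> Prop),
      is_block_algebra B /\ iso_to_inclusion_lattice L (subalgebra_of B)).
Proof.
split.
- move=> [A [F [cF iso]]]; exists A, (Bf F); split.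
    split; last exact: Bf_closed.
    by move=> phi [[n f] [_ ->]]; exists n, f.
  apply: (transfer (Phi := @Bf A) (Psi := @Fb A)) iso.
  + move=> X [incl clX]; split; last exact: Bf_closed.
    by move=> phi [o [Xo ->]]; exists o; split => //; apply: incl.
  + move=> Y [incl clY]; split; last exact: Fb_clone.
    move=> [n f] /= Yf; case: (incl _ Yf) => [[m g] [Fg /= e]].
    exact: (KL cF Fg (esym e)).
  + move=> X [_ clX] [n f]; split.
      by move=> [[m g] [Xg /= e]]; exact: (KL clX Xg (esym e)).
    by move=> Xf; exists (mk_op f).
  + move=> Y [incl _] phi; split; first by move=> [o [Yo ->]].
    move=> Yphi; case: (incl _ Yphi) => o [_ E]; exists o; split => //.
    by rewrite /Fb -E.
  + by move=> X X' H phi [o [Xo ->]]; exists o; split => //; apply: H.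
  + by move=> Y Y' H o; apply: H.
- move=> [A [B [[full clB] iso]]]; exists A, (Fb B); split.
    exact: Fb_clone.
  apply: (transfer (Phi := @Fb A) (Psi := @Bf A)) iso.
  + move=> S [incl clS]; split; last exact: Fb_clone.
    by move=> o; apply: incl.
  + move=> G [incl clG]; split; last exact: Bf_closed.
    by move=> phi [o [Go ->]]; exact: incl _ Go.
  + move=> S [incl _] phi; split; first by move=> [o [So ->]].
    move=> Sphi; case: (full _ (incl _ Sphi)) => n [f E].
    by exists (mk_op f); split => //; rewrite /Fb /= -E.
  + move=> G [_ clG] [n f]; split.
      by move=> [[m g] [Gg /= e]]; exact: (KL clG Gg (esym e)).
    by move=> Gf; exists (mk_op f).
  + by move=> Y Y' H o; apply: H.
  + by move=> X X' H phi [o [Xo ->]]; exists o; split => //; apply: H.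
Qed.
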